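(* Let $p\geq 3$ and let $\varphi$ be a nonzero short homomorphism of $\mathcal{T}_p$ with associated functionals $\lambda$ (on $\langle w_1,\dots,w_p\rangle$) and $\mu$ (on $\langle\mathfrak{z}_0,\dots,\mathfrak{z}_p\rangle$). Then there exist $k\in\{0,1,\dots,p\}$ and $\alpha\in\mathbb{F}$, $\alpha\neq0$, such that $\lambda=\alpha\lambda_k$ and $\mu=\alpha^2\mu_k$, where: $\lambda_0(w_i)=1$ for $1\le i\le p$, $\mu_0(\mathfrak{z}_0)=1$, $\mu_0(\mathfrak{z}_i)=0$ for $1\le i\le p$; and for $1\le k\le p$, $\lambda_k(w_j)=\delta_{kj}$, $\mu_k(\mathfrak{z}_0)=0$, $\mu_k(\mathfrak{z}_j)=\delta_{kj}$ for $1\le j\le p$. Conversely each pair $(\lambda_k,\mu_k)$ defines a short homomorphism.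
   Context: $\mathbb{F}$ is a field of characteristic not $2$. $\mathcal{T}_p$ is the normal algebra over $\mathbb{F}$ with $U$-space having basis $w_1,\dots,w_p$ and $\mathfrak{Z}$-space having basis $\mathfrak{z}_0,\mathfrak{z}_1,\dots,\mathfrak{z}_p$, commutative bilinear product given by $w_iw_j=\mathfrak{z}_0+\delta_{ij}\mathfrak{z}_i$ ($1\le i,j\le p$, $\delta$ the Kronecker delta), and all other basis products $0$. The spline algebra $\mathcal{S}$ has basis $r$ (its $U$-space) and $\mathfrak{s}$ (its $\mathfrak{Z}$-space) with $r^2=\mathfrak{s}$ and all other products $0$. A short homomorphism of a normal algebra $U\oplus\mathfrak{Z}$ is a product-preserving linear map to $\mathcal{S}$ sending $U$ into $\langle r\rangle$ and $\mathfrak{Z}$ into $\langle\mathfrak{s}\rangle$; it has the form $u+\mathfrak{z}\mapsto\lambda(u)r+\mu(\mathfrak{z})\mathfrak{s}$ for linear functionals $\lambda,\mu$ with $\mu(uv)=\lambda(u)\lambda(v)$ for all $u,v\in U$. *)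

(* Defs.v *)
From HB Require Import structures.
From mathcomp Require Import all_boot all_order all_algebra.
Set Implicit Arguments. Unset Strict Implicit. Unset Printing Implicit Defensive.
Import Order.TTheory GRing.Theory Num.Theory.
Local Open Scope ring_scope.

(* The normal algebra T_p = U (+) Z over a field F.
   U = F^p as row vectors 'rV_p : the basis vector w_{i+1} is wb i (i : 'I_p).
   Z = F^{p+1} as row vectors 'rV_(p.+1) : the basis vector z_j is zb j (j : 'I_p.+1),
   so z_0 = zb ord0 and z_{i+1} = zb (lift ord0 i). *)

Definition wb {F : fieldType} {p : nat} (i : 'I_p) : 'rV[F]_p := delta_mx 0 i.
Definition zb {F : fieldType} {p : nat} (j : 'I_p.+1) : 'rV[F]_p.+1 := delta_mx 0 j.

(* basis products: w_i w_j = z_0 + delta_ij z_i *)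
Definition tp_basis_mul {F : fieldType} {p : nat} (i j : 'I_p) : 'rV[F]_p.+1 :=
  zb ord0 + (i == j)%:R *: zb (lift ord0 i).

Definition tp_mul {F : fieldType} {p : nat} (u v : 'rV[F]_p) : 'rV[F]_p.+1 :=
  \sum_(i < p) \sum_(j < p) (u 0 i * v 0 j) *: tp_basis_mul i j.

Definition is_linear_functional {F : fieldType} {n : nat} (f : 'rV[F]_n -> F) : Prop :=
  forall (a : F) (x y : 'rV[F]_n), f (a *: x + y) = a * f x + f y.

(* A short homomorphism of T_p to the spline algebra S, given by its pair of
   linear functionals (lambda on U, mu on Z) with mu(uv) = lambda(u) lambda(v). *)
Definition short_hom {F : fieldType} {p : nat}
  (lam : 'rV[F]_p -> F) (mu : 'rV[F]_p.+1 -> F) : Prop :=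
  [/\ is_linear_functional lam, is_linear_functional mu &
      forall u v : 'rV[F]_p, mu (tp_mul u v) = lam u * lam v].

(* the short homomorphism u + z |-> lam(u) r + mu(z) s is nonzero *)
Definition short_hom_nonzero {F : fieldType} {p : nat}
  (lam : 'rV[F]_p -> F) (mu : 'rV[F]_p.+1 -> F) : Prop :=
  (exists u, lam u != 0) \/ (exists z, mu z != 0).

Definition lam_val {F : fieldType} {p : nat} (k : 'I_p.+1) (i : 'I_p) : F :=
  if k == ord0 then 1 else (k == lift ord0 i)%:R.
Definition mu_val {F : fieldType} {p : nat} (k : 'I_p.+1) (j : 'I_p.+1) : F :=
  if k == ord0 then (j == ord0)%:R else (k == j)%:R.

Definition lam_k {F : fieldType} {p : nat} (k : 'I_p.+1) (u : 'rV[F]_p) : F :=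
  \sum_(i < p) u 0 i * lam_val k i.
Definition mu_k {F : fieldType} {p : nat} (k : 'I_p.+1) (z : 'rV[F]_p.+1) : F :=
  \sum_(j < p.+1) z 0 j * mu_val k j.

(* Main.v *)
Require Import Defs.
From HB Require Import structures.
From mathcomp Require Import all_boot all_order all_algebra.
From mathcomp Require Import zify ring.
Import Order.TTheory GRing.Theory Num.Theory.
Set Implicit Arguments. Unset Strict Implicit.
Local Open Scope ring_scope.

Section Aux.
Variable F : fieldType.

Lemma lf0 n (f : 'rV[F]_n -> F) : is_linear_functional f -> f 0 = 0.
Proof.
move=> Hf; have h := Hf 1 0 0; rewrite scaler0 addr0 mul1r in h.
by apply: (addrI (f 0)); rewrite addr0 -h.
Qed.

Lemma lfD n (f : 'rV[F]_n -> F) : is_linear_functional f -> forall x y, f (x + y) = f x + f y.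
Proof. by move=> Hf x y; rewrite -[x]scale1r Hf mul1r scale1r. Qed.

Lemma lfZ n (f : 'rV[F]_n -> F) : is_linear_functional f -> forall a x, f (a *: x) = a * f x.
Proof. by move=> Hf a x; rewrite -[a *: x]addr0 Hf lf0 // addr0. Qed.

Lemma lfS n (f : 'rV[F]_n -> F) : is_linear_functional f ->
  forall (I : Type) (r : seq I) (x : I -> 'rV[F]_n),
  f (\sum_(i <- r) x i) = \sum_(i <- r) f (x i).
Proof.
move=> Hf I r x; elim: r => [|a r IH]; first by rewrite !big_nil lf0.
by rewrite !big_cons lfD // IH.
Qed.

Lemma lf_exp n (f : 'rV[F]_n -> F) : is_linear_functional f ->
  forall u, f u = \sum_(i < n) u 0 i * f (delta_mx 0 i).
Proof.
move=> Hf u; rewrite {1}(row_sum_delta u) lfS //.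
by apply: eq_bigr => i _; rewrite lfZ.
Qed.

Lemma sum_dl n (i : 'I_n) (g : 'I_n -> F) :
  \sum_(i' < n) (delta_mx 0 i : 'rV[F]_n) 0 i' * g i' = g i.
Proof.
rewrite (bigD1 i) //= mxE !eqxx mul1r big1 ?addr0 // => k /negbTE.
by rewrite mxE eqxx /= => ->; rewrite mul0r.
Qed.

Lemma mu_tp p (mu : 'rV[F]_p.+1 -> F) : is_linear_functional mu ->
  forall u v, mu (tp_mul u v) =
   \sum_(i < p) \sum_(j < p) (u 0 i * v 0 j) *
      (mu (zb ord0) + (i == j)%:R * mu (zb (lift ord0 i))).
Proof.
move=> Hf u v; rewrite /tp_mul lfS //; apply: eq_bigr => i _.
rewrite lfS //; apply: eq_bigr => j _.
by rewrite lfZ // /tp_basis_mul lfD // lfZ.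
Qed.

Lemma lf_basis p (lam : 'rV[F]_p -> F) (mu : 'rV[F]_p.+1 -> F) :
  is_linear_functional lam -> is_linear_functional mu ->
  (forall i j, mu (zb ord0) + (i == j)%:R * mu (zb (lift ord0 i))
               = lam (wb i) * lam (wb j)) ->
  forall u v, mu (tp_mul u v) = lam u * lam v.
Proof.
move=> Hl Hm H u v; rewrite mu_tp // (lf_exp Hl u) (lf_exp Hl v) big_distrl.
apply: eq_bigr => i _; rewrite big_distrr /=; apply: eq_bigr => j _.
by rewrite H /wb; ring.
Qed.

Lemma third p (i j : 'I_p) : (3 <= p)%N -> exists l : 'I_p, l != i /\ l != j.
Proof.
move=> hp.
have h0 : (0 < p)%N by lia. have h1 : (1 < p)%N by lia. have h2 : (2 < p)%N by lia.
have ne : forall (a b : 'I_p), (a:nat) <> b -> a != b.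
  by move=> a b hab; apply/eqP => e; apply: hab; rewrite e.
have [hi|hi] := boolP (((i:nat) != 0%N) && ((j:nat) != 0%N)).
  exists (Ordinal h0); split; apply: ne => /=; lia.
have [hj|hj] := boolP (((i:nat) != 1%N) && ((j:nat) != 1%N)).
  exists (Ordinal h1); split; apply: ne => /=; lia.
exists (Ordinal h2); split; apply: ne => /=; lia.
Qed.

End Aux.

Theorem lemma7p1 (F : fieldType) (p : nat) :
  (2%:R : F) != 0 -> (3 <= p)%N ->
  (forall (lam : 'rV[F]_p -> F) (mu : 'rV[F]_p.+1 -> F),
      short_hom lam mu -> short_hom_nonzero lam mu ->
      exists (k : 'I_p.+1) (alpha : F),
        [/\ alpha != 0,
            (forall u, lam u = alpha * lam_k k u) &
            (forall z, mu z = alpha ^+ 2 * mu_k k z)])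
  /\ (forall k : 'I_p.+1, short_hom (@lam_k F p k) (@mu_k F p k)).
Proof.
move=> h2 hp; split; last first.
  move=> k.
  have Ll : is_linear_functional (@lam_k F p k).
    move=> a x y; rewrite /lam_k mulr_sumr -big_split; apply: eq_bigr => i _.
    by rewrite !mxE /= mulrDl mulrA.
  have Lm : is_linear_functional (@mu_k F p k).
    move=> a x y; rewrite /mu_k mulr_sumr -big_split; apply: eq_bigr => i _.
    by rewrite !mxE /= mulrDl mulrA.
  split => //; apply: lf_basis => // i j.
  rewrite /lam_k /mu_k /wb /zb !sum_dl /lam_val /mu_val.
  have l0 : forall t : 'I_p, (lift ord0 t == ord0) = false.
    by move=> t; apply/negbTE; rewrite eq_sym neq_lift.
  case: ifP => kn; first by rewrite eqxx l0 !mulr0 addr0 mulr1.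
  rewrite kn add0r.
  have [<-|nij] := eqVneq i j; first by rewrite mul1r -natrM mulnb andbb.
  rewrite mul0r -natrM mulnb.
  have [->|] := eqVneq k (lift ord0 i); last by rewrite andFb.
  by rewrite (inj_eq (@lift_inj _ ord0)) (negbTE nij).
move=> lam mu [Hl Hm Hmul] Hnz.
set a := fun i => lam (wb i).
set m := fun j => mu (zb j).
have H : forall i j, m ord0 + (i == j)%:R * m (lift ord0 i) = a i * a j.
  move=> i j; rewrite -Hmul mu_tp //.
  rewrite (eq_bigr (fun i0 => wb i 0 i0 * \sum_(j0 < p) wb j 0 j0 *
        (mu (zb ord0) + (i0 == j0)%:R * mu (zb (lift ord0 i0))))); last first.
    by move=> i0 _; rewrite mulr_sumr; apply: eq_bigr => j0 _; rewrite mulrA.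
  by rewrite /wb sum_dl sum_dl.
have l0 : forall t : 'I_p, (lift ord0 t == ord0) = false.
  by move=> t; apply/negbTE; rewrite eq_sym neq_lift.
have expl : forall u, lam u = \sum_(i < p) u 0 i * a i by apply: lf_exp.
have expm : forall z, mu z = \sum_(j < p.+1) z 0 j * m j by apply: lf_exp.
have fin : forall (k : 'I_p.+1) (al : F), al != 0 ->
    (forall i, a i = al * lam_val k i) ->
    (forall j, m j = al ^+ 2 * mu_val k j) ->
    exists (k : 'I_p.+1) (alpha : F),
        [/\ alpha != 0,
            (forall u, lam u = alpha * lam_k k u) &
            (forall z, mu z = alpha ^+ 2 * mu_k k z)].
  move=> k al nz ha hm; exists k, al; split => //.
    by move=> u; rewrite expl /lam_k mulr_sumr; apply: eq_bigr => i _; rewrite ha; ring.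
  by move=> z; rewrite expm /mu_k mulr_sumr; apply: eq_bigr => i _; rewrite hm; ring.
have h0 : (0 < p)%N by lia. have h1 : (1 < p)%N by lia.
have n01 : Ordinal h0 != Ordinal h1 by [].
have [m0|m0] := eqVneq (m ord0) 0; last first.
  have Hne : forall i j, i != j -> a i * a j = m ord0.
    by move=> i j /negbTE nij; rewrite -H nij mul0r addr0.
  have anz : forall i, a i != 0.
    move=> i; have [l [li _]] := third i i hp.
    by apply: contra m0 => /eqP ai; rewrite -(Hne i l) 1?eq_sym // ai mul0r.
  have aeq : forall i j, a i = a j.
    move=> i j; have [l [li lj]] := third i j hp.
    apply: (mulIf (anz l)); rewrite !Hne // eq_sym //.
  apply: (fin ord0 (a (Ordinal h0))) => //.
    by move=> i; rewrite /lam_val eqxx mulr1 (aeq i (Ordinal h0)).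
  move=> j; rewrite /mu_val eqxx.
  have mo : m ord0 = a (Ordinal h0) ^+ 2.
    by rewrite expr2 {2}(aeq (Ordinal h0) (Ordinal h1)) Hne.
  case: (unliftP ord0 j) => [t ->|->]; last by rewrite mo eqxx mulr1.
  rewrite l0 mulr0.
  have := H t t; rewrite eqxx mul1r mo (aeq t (Ordinal h0)) expr2 => /eqP.
  by rewrite addrC -subr_eq0 addrK => /eqP.
have Hne : forall i j, i != j -> a i * a j = 0.
  by move=> i j /negbTE nij; rewrite -H nij mul0r addr0.
have Hmi : forall i, m (lift ord0 i) = a i ^+ 2.
  by move=> i; rewrite expr2 -H m0 add0r eqxx mul1r.
have [/existsP [i ai]|none] := boolP [exists i, a i != 0]; last first.
  exfalso; have az : forall i, a i = 0.
    by move=> i; apply/eqP; apply: contraNT none => ai; apply/existsP; exists i.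
  case: Hnz => [[u]|[z]]; apply/negP/negPn/eqP.
    by rewrite expl big1 // => i _; rewrite az mulr0.
  rewrite expm big1 // => j _; case: (unliftP ord0 j) => [t ->|->].
    by rewrite Hmi az expr2 mulr0 mulr0.
  by rewrite m0 mulr0.
apply: (fin (lift ord0 i) (a i)) => //.
  move=> j; rewrite /lam_val l0 (inj_eq (@lift_inj _ ord0)).
  have [<-|nij] := eqVneq i j; first by rewrite mulr1.
  by rewrite mulr0; apply: (mulfI ai); rewrite Hne // mulr0.
move=> j; rewrite /mu_val l0; case: (unliftP ord0 j) => [t ->|->].
  rewrite (inj_eq (@lift_inj _ ord0)) Hmi.
  have [<-|nij] := eqVneq i t; first by rewrite mulr1.
  rewrite (_ : a t = 0) ?expr2 ?mulr0 //.
  by apply: (mulfI ai); rewrite Hne // mulr0.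
by rewrite m0 ?l0 mulr0.
Qed.
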